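(* Let $\mathbf P\subset\mathbb Z^n$ be finite with $P=\operatorname{Conv}\mathbf P$, and let $D$ be a daughter polytope of $\mathbf P$ with associated set $\mathcal D=\mathcal D(D)$. Let $W\in\mathcal D$ and let $S$ be a face of $P$ with $S\subset W$. Then for every $W'\in\mathcal D\setminus\{W\}$, the projection $\pi_S(W')$ does not intersect $\mathbf P_S$.
   Context: **Quotient projection.** $\pi_S:\mathbb R^n\to\mathbb R^n/\operatorname{aff}(S)$ sends $\operatorname{aff}(S)$ to the origin. **Daughter polytope.** For a nonempty polytope $D$ with vertices in $\mathbf P$, $\mathcal D(D)$ is the set of inclusion-maximal faces $F$ of $P$ with $D\cap F=\emptyset$. $D$ is a daughter polytope of $\mathbf P$ if: 1. distinct faces in $\mathcal D(D)$ are pairwise disjoint; 2. $D=\operatorname{Conv}(\mathbf P\setminus\bigcup_{F\in\mathcal D(D)}F)$. **The set $\mathbf P_S$.** For a face $S$ of $P$: $$\mathbf P_S=\pi_S(\mathbf P)\cap\overline{\pi_S(P)\setminus\pi_S(\operatorname{Conv}(\mathbf P\setminus S))},$$ where the overline denotes topological closure. *)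

(* Defs.v *)
From HB Require Import structures.
From mathcomp Require Import all_boot all_order all_algebra.
From mathcomp Require Import all_classical all_reals all_analysis.
Set Implicit Arguments. Unset Strict Implicit. Unset Printing Implicit Defensive.
Import Order.TTheory GRing.Theory Num.Theory.
Import numFieldNormedType.Exports.
Local Open Scope classical_set_scope.
Local Open Scope ring_scope.

Section PolytopeDefs.
Variable R : realType.

Definition pconv (n : nat) (A : set 'rV[R]_n) : set 'rV[R]_n :=
  [set x | exists (k : nat) (w : 'I_k -> R) (p : 'I_k -> 'rV[R]_n),
      (forall i, 0 <= w i) /\ (\sum_(i < k) w i = 1) /\
      (forall i, A (p i)) /\ x = \sum_(i < k) w i *: p i].

Definition paff (n : nat) (A : set 'rV[R]_n) : set 'rV[R]_n :=
  [set x | exists (k : nat) (w : 'I_k -> R) (p : 'I_k -> 'rV[R]_n),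
      (\sum_(i < k) w i = 1) /\
      (forall i, A (p i)) /\ x = \sum_(i < k) w i *: p i].

Definition aff_dir (n : nat) (A : set 'rV[R]_n) : set 'rV[R]_n :=
  [set x - y | x in paff A & y in paff A].

Definition pdot (n : nat) (c x : 'rV[R]_n) : R := \sum_(i < n) c 0 i * x 0 i.

(* F is a face of the polytope P: the intersection of P with a (weakly)
   supporting hyperplane {x | c.x = d} with c.y <= d on P
   (c = 0 allowed, so P itself and the empty set are faces). *)
Definition is_pface (n : nat) (P F : set 'rV[R]_n) : Prop :=
  exists (c : 'rV[R]_n) (d : R),
    (forall y, P y -> pdot c y <= d) /\
    F = [set x | P x /\ pdot c x = d].

(* pi is (a concrete model of) the quotient projection
   R^n -> R^n / paff(S) sending paff(S) to the origin: pi = f(. - s) with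
   s in paff S and f a linear surjection R^n -> R^m whose kernel is exactly
   the direction of paff S (so R^m is identified with R^n / dir(paff S)). *)
Definition quot_proj (n m : nat) (S : set 'rV[R]_n)
    (pi : 'rV[R]_n -> 'rV[R]_m) : Prop :=
  exists (f : {linear 'rV[R]_n -> 'rV[R]_m}) (s : 'rV[R]_n),
    paff S s /\
    (forall y, exists x, f x = y) /\
    (forall x, f x = 0 <-> aff_dir S x) /\
    (forall x, pi x = f (x - s)).

Definition dfaces (n : nat) (Pts D : set 'rV[R]_n) : set (set 'rV[R]_n) :=
  [set F | is_pface (pconv Pts) F /\ D `&` F = set0 /\
     (forall G, is_pface (pconv Pts) G -> D `&` G = set0 -> F `<=` G -> G = F)].

Definition is_daughter (n : nat) (Pts D : set 'rV[R]_n) : Prop :=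
  (exists V, V `<=` Pts /\ D = pconv V) /\ D !=set0 /\
  (forall F G, dfaces Pts D F -> dfaces Pts D G -> F <> G -> F `&` G = set0) /\
  D = pconv (Pts `\` \bigcup_(F in dfaces Pts D) F).

Definition PS_set (n m : nat) (Pts S : set 'rV[R]_n)
    (pi : 'rV[R]_n -> 'rV[R]_m) : set 'rV[R]_m :=
  (pi @` Pts) `&`
  closure ((pi @` pconv Pts) `\` (pi @` pconv (Pts `\` S))).

End PolytopeDefs.

(* Main.v *)
Require Import Defs.
From HB Require Import structures.
From mathcomp Require Import all_boot all_order all_algebra.
From mathcomp Require Import all_classical all_reals all_analysis.
Import Order.TTheory GRing.Theory Num.Theory.
Import numFieldNormedType.Exports.
Local Open Scope classical_set_scope.
Local Open Scope ring_scope.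

Set Implicit Arguments. Unset Strict Implicit. Unset Printing Implicit Defensive.

Section Aux.
Variable R : realType.

Lemma pdotDr m (c x y : 'rV[R]_m) : pdot c (x + y) = pdot c x + pdot c y.
Proof. by rewrite /pdot -big_split /=; apply: eq_bigr => i _; rewrite mxE mulrDr. Qed.
Lemma pdotZr m (c x : 'rV[R]_m) a : pdot c (a *: x) = a * pdot c x.
Proof. by rewrite /pdot mulr_sumr; apply: eq_bigr => i _; rewrite mxE mulrCA. Qed.
Lemma pdotDl m (c d x : 'rV[R]_m) : pdot (c + d) x = pdot c x + pdot d x.
Proof. by rewrite /pdot -big_split /=; apply: eq_bigr => i _; rewrite mxE mulrDl. Qed.
Lemma pdotZl m (c x : 'rV[R]_m) a : pdot (a *: c) x = a * pdot c x.
Proof. by rewrite /pdot mulr_sumr; apply: eq_bigr => i _; rewrite mxE mulrA. Qed.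
Lemma pdot0r m (c : 'rV[R]_m) : pdot c 0 = 0.
Proof. by rewrite /pdot big1 // => i _; rewrite mxE mulr0. Qed.
Lemma pdotNr m (c x : 'rV[R]_m) : pdot c (- x) = - pdot c x.
Proof. by rewrite -scaleN1r pdotZr mulN1r. Qed.
Lemma pdotBr m (c x y : 'rV[R]_m) : pdot c (x - y) = pdot c x - pdot c y.
Proof. by rewrite pdotDr pdotNr. Qed.
Lemma pdotNl m (c x : 'rV[R]_m) : pdot (- c) x = - pdot c x.
Proof. by rewrite -scaleN1r pdotZl mulN1r. Qed.
Lemma pdotBl m (c d x : 'rV[R]_m) : pdot (c - d) x = pdot c x - pdot d x.
Proof. by rewrite pdotDl pdotNl. Qed.
Lemma pdot_sumr m I (r : seq I) (P : pred I) (c : 'rV[R]_m) (F : I -> 'rV[R]_m) :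
  pdot c (\sum_(i <- r | P i) F i) = \sum_(i <- r | P i) pdot c (F i).
Proof.
elim/big_rec2: _ => [|i y1 y2 _ <-]; first by rewrite pdot0r.
by rewrite pdotDr.
Qed.
Lemma pdot_self_gt0 m (b : 'rV[R]_m) : b != 0 -> 0 < pdot b b.
Proof.
move=> bn0; rewrite /pdot.
have [j bj] : exists j, b 0 j != 0.
  apply/existsP; apply: contraR bn0 => /existsPn H; apply/eqP/rowP => j.
  by rewrite mxE; move: (H j); rewrite negbK => /eqP.
rewrite (bigD1 j) //=; apply: ltr_pwDl.
  by rewrite -expr2 exprn_even_gt0 // bj orbT.
by apply: sumr_ge0 => i _; rewrite -expr2 sqr_ge0.
Qed.

Lemma farkas m N (g : 'I_N -> 'rV[R]_m) (b : 'rV[R]_m) :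
  (exists mu : 'I_N -> R, (forall i, 0 <= mu i) /\ b = \sum_i mu i *: g i) \/
  (exists y, (forall i, pdot y (g i) <= 0) /\ 0 < pdot y b).
Proof.
elim: N g b => [|N IH] g b.
  have [->|bn0] := eqVneq b 0.
    by left; exists (fun=> 0); split=> // ; rewrite big_ord0.
  by right; exists b; split; [case|exact: pdot_self_gt0].
pose a := g ord0; pose g' := fun i => g (lift ord0 i).
have [[mu [mu0 Hb]]|[y1 [Hy1 Hy1b]]] := IH g' b.
  left; exists (fun i => if unlift ord0 i is Some j then mu j else 0); split.
    by move=> i; case: unliftP.
  by rewrite big_ord_recl /= unlift_none scale0r add0r Hb; apply: eq_bigr => i _; rewrite liftK.
have [ta|ta] := lerP (pdot y1 a) 0.
  right; exists y1; split=> // i; case: (unliftP ord0 i) => [j ->|->]; [exact: Hy1|exact: ta].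
set t := pdot y1 a in ta.
pose al := fun i => pdot y1 (g' i) / t.
pose g'' := fun i => g' i - al i *: a.
pose b' := b - (pdot y1 b / t) *: a.
have tn0 : t != 0 by rewrite gt_eqF.
have [[mu [mu0 Hb]]|[y2 [Hy2 Hy2b]]] := IH g'' b'.
  left; exists (fun i => if unlift ord0 i is Some j then mu j
                        else \sum_j mu j * (- al j) + pdot y1 b / t); split.
    move=> i; case: unliftP => [j|] _; first exact: mu0.
    apply: addr_ge0; last by rewrite divr_ge0 // ltW.
    apply: sumr_ge0 => j _; apply: mulr_ge0 => //; rewrite oppr_ge0.
    by rewrite /al pmulr_lle0 ?invr_gt0.
  rewrite big_ord_recl /= unlift_none.
  have Hb' : b = b' + (pdot y1 b / t) *: a by rewrite /b' subrK.
  rewrite {1}Hb' Hb /g'' scalerDl scaler_suml.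
  rewrite (eq_bigr (fun i => mu i *: g' i + (mu i * - al i) *: a)); last first.
    by move=> i _; rewrite scalerBr scalerA mulrN scaleNr.
  rewrite big_split /= [RHS]addrC addrA; congr (_ + _ + _).
  by apply: eq_bigr => i _; rewrite liftK.
right; exists (y2 - (pdot y2 a / t) *: y1).
have e1 : forall i, pdot y1 (g'' i) = 0.
  by move=> i; rewrite /g'' pdotBr pdotZr /al divfK // subrr.
have e2 : pdot y1 b' = 0 by rewrite /b' pdotBr pdotZr divfK // subrr.
have e3 : pdot (y2 - (pdot y2 a / t) *: y1) a = 0.
  by rewrite pdotBl pdotZl -/t divfK // subrr.
split.
  move=> i; case: (unliftP ord0 i) => [j ->|->]; last by rewrite e3.
  have -> : g (lift ord0 j) = g'' j + al j *: a by rewrite /g'' subrK.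
  by rewrite pdotDr pdotZr e3 mulr0 addr0 pdotBl pdotZl e1 mulr0 subr0.
have -> : b = b' + (pdot y1 b / t) *: a by rewrite /b' subrK.
by rewrite pdotDr pdotZr e3 mulr0 addr0 pdotBl pdotZl e2 mulr0 subr0.
Qed.


Lemma coef_le_norm m (v : 'rV[R]_m) j : `|v 0 j| <= `|v|.
Proof. by rewrite [leRHS]/Num.Def.normr /= mx_normrE; apply/bigmax_geP; right; exists (0, j). Qed.

Definition CBP m N (h : 'I_N -> 'rV[R]_m) (T : {set 'I_N}) (C : R) :=
  forall gam : 'I_N -> R, (forall i, 0 <= gam i) -> (forall i, i \notin T -> gam i = 0) ->
  exists gam' : 'I_N -> R, (forall i, 0 <= gam' i) /\ (forall i, i \notin T -> gam' i = 0) /\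
    \sum_i gam' i *: h i = \sum_i gam i *: h i /\
    \sum_i gam' i <= C * `|\sum_i gam i *: h i|.

Lemma cone_bound m N (h : 'I_N -> 'rV[R]_m) (T : {set 'I_N}) :
  exists C, 0 <= C /\ CBP h T C.
Proof.
move Hk: #|T| => k; elim/ltn_ind: k T Hk => k IH T Hk.
case: (pselect (exists dl : 'I_N -> R, (forall i, i \notin T -> dl i = 0) /\
   (exists i, dl i != 0) /\ \sum_i dl i *: h i = 0)) => [[dl [dlT [[i0 di0] dl0]]]|indep].
  have [dl' [dlT' [[i1 di1] dl0']]] : exists dl' : 'I_N -> R,
      (forall i, i \notin T -> dl' i = 0) /\ (exists i, 0 < dl' i) /\ \sum_i dl' i *: h i = 0.
    case: (ltrgtP (dl i0) 0) => H.
    - exists (fun i => - dl i); split; first by move=> i /dlT ->; rewrite oppr0.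
      split; first by exists i0; rewrite oppr_gt0.
      by rewrite (eq_bigr (fun i => - (dl i *: h i))) ?sumrN ?dl0 ?oppr0 // => i _; rewrite scaleNr.
    - by exists dl; split=> //; split=> //; exists i0.
    - by move: di0; rewrite H eqxx.
  have HC : forall i, exists C, 0 <= C /\ (i \in T -> CBP h (T :\ i) C).
    move=> i; case iT: (i \in T); last by exists 0.
    have : (#|T :\ i| < k)%N by rewrite -Hk (cardsD1 i T) iT.
    move=> /IH /(_ (T :\ i) erefl) [C [C0 HC]]; by exists C.
  have [Cf HCf] := choice HC.
  exists (\sum_i Cf i); split; first by apply: sumr_ge0 => i _; case: (HCf i).
  move=> gam gam0 gamT.
  case: (@arg_minP _ _ _ i1 (fun i => 0 < dl' i) (fun i => gam i / dl' i) di1).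
  move=> j0 dj0 Hmin.
  set t := gam j0 / dl' j0.
  have t0 : 0 <= t by rewrite /t divr_ge0 // ltW.
  pose gam1 := fun i => gam i - t * dl' i.
  have j0T : j0 \in T by apply: contraLR dj0 => /dlT' ->; rewrite ltxx.
  have g10 : forall i, 0 <= gam1 i.
    move=> i; rewrite /gam1 subr_ge0; case: (ltrP 0 (dl' i)) => Hd.
      by rewrite -ler_pdivlMr // Hmin.
    by apply: le_trans (gam0 i); rewrite mulr_ge0_le0.
  have g1T : forall i, i \notin T :\ j0 -> gam1 i = 0.
    move=> i; rewrite /gam1 in_setD1 negb_and negbK => /orP[/eqP ->|iT].
      by rewrite /t divfK ?subrr // gt_eqF.
    by rewrite gamT // dlT' // mulr0 subrr.
  have g1s : \sum_i gam1 i *: h i = \sum_i gam i *: h i.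
    rewrite /gam1 (eq_bigr (fun i => gam i *: h i - t *: (dl' i *: h i))); last first.
      by move=> i _; rewrite scalerBl scalerA.
    by rewrite sumrB -scaler_sumr dl0' scaler0 subr0.
  have [C0 /(_ j0T) HC0] := HCf j0.
  have [gam' [g'0 [g'T [g's g'b]]]] := HC0 gam1 g10 g1T.
  exists gam'; split=> //; split.
    by move=> i iT; apply: g'T; rewrite in_setD1 (negbTE iT) andbF.
  split; first by rewrite g's g1s.
  apply: (le_trans g'b); rewrite g1s ler_wpM2r //.
  by rewrite (bigD1 j0) //= lerDl sumr_ge0 // => i _; case: (HCf i).
pose Gm := \matrix_(i < N) (if i \in T then h i else 0).
pose Pm := pinvmx Gm.
exists (\sum_i \sum_j `|Pm j i|); split.
  by apply: sumr_ge0 => i _; apply: sumr_ge0.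
move=> gam gam0 gamT.
set y := \sum_i gam i *: h i.
have Hy : y = (\row_i gam i) *m Gm.
  rewrite mulmx_sum_row /y; apply: eq_bigr => i _; rewrite rowK mxE.
  by case: ifP => // /negbT /gamT ->; rewrite !scale0r.
pose gr := fun i => if i \in T then (y *m Pm) 0 i else 0.
have Hgr : \sum_i gr i *: h i = y.
  rewrite {1}Hy -(mulmxKpV (submxMl (\row_i gam i) Gm)) -Hy mulmx_sum_row.
  by apply: eq_bigr => i _; rewrite rowK /gr; case: ifP => _; rewrite ?scale0r ?scaler0.
have Heq : forall i, gam i = gr i.
  move=> i; apply/eqP; rewrite -subr_eq0; apply/eqP.
  apply: contra_notP indep => Hne; exists (fun i => gam i - gr i); split.
    by move=> j jT; rewrite gamT // /gr (negbTE jT) subrr.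
  split; first by exists i; apply/eqP.
  rewrite (eq_bigr (fun j => gam j *: h j - gr j *: h j)); last by move=> j _; rewrite scalerBl.
  by rewrite sumrB Hgr subrr.
exists gam; split=> //; split=> //; split=> //.
rewrite (eq_bigr gr) // big_distrl /=; apply: ler_sum => i _.
rewrite /gr; case: ifP => _; last by apply: mulr_ge0 => //; apply: sumr_ge0.
rewrite mxE big_distrl /=; apply: le_trans (ler_norm _) _.
apply: le_trans (ler_norm_sum _ _ _) _; apply: ler_sum => j _.
by rewrite normrM mulrC ler_wpM2l // coef_le_norm.
Qed.

End Aux.

Section Geo.
Variable R : realType.
Variable n : nat.
Implicit Types (A : set 'rV[R]_n).

Lemma pconv_pt A x : A x -> pconv A x.
Proof.
move=> Ax; exists 1%N, (fun=> 1), (fun=> x); split=> //; split; first by rewrite big_ord1.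
by split=> //; rewrite big_ord1 scale1r.
Qed.

Lemma paff_pt A x : A x -> paff A x.
Proof.
move=> Ax; exists 1%N, (fun=> 1), (fun=> x); split; first by rewrite big_ord1.
by split=> //; rewrite big_ord1 scale1r.
Qed.

Lemma pos_weight k (w : 'I_k -> R) :
  (forall i, 0 <= w i) -> \sum_i w i = 1 -> exists i, 0 < w i.
Proof.
move=> w0 w1; case: (pselect (exists i, 0 < w i)) => // H; exfalso.
have : \sum_i w i = 0.
  apply: big1 => i _; apply/eqP; rewrite eq_le w0 andbT leNgt; apply/negP => Hi.
  by apply: H; exists i.
by rewrite w1 => /eqP; rewrite oner_eq0.
Qed.

Lemma pdot_comb (c : 'rV[R]_n) k (w : 'I_k -> R) (p : 'I_k -> 'rV[R]_n) :
  pdot c (\sum_i w i *: p i) = \sum_i w i * pdot c (p i).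
Proof. by rewrite pdot_sumr; apply: eq_bigr => i _; rewrite pdotZr. Qed.

Lemma face_pos (c : 'rV[R]_n) d k (w : 'I_k -> R) p :
  (forall i, 0 <= w i) -> \sum_i w i = 1 -> (forall i, pdot c (p i) <= d) ->
  pdot c (\sum_i w i *: p i) = d -> forall i, 0 < w i -> pdot c (p i) = d.
Proof.
move=> w0 w1 hle heq i wi.
have H : \sum_i w i * (d - pdot c (p i)) = 0.
  rewrite (eq_bigr (fun i => w i * d - w i * pdot c (p i))); last by move=> j _; rewrite mulrBr.
  by rewrite sumrB -mulr_suml w1 mul1r -pdot_comb heq subrr.
have hnn : forall j, predT j -> 0 <= w j * (d - pdot c (p j)).
  by move=> j _; rewrite mulr_ge0 // subr_ge0.
have /eqP := psumr_eq0P hnn H (isT : predT i).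
rewrite mulf_eq0 (gt_eqF wi) /= subr_eq0 => /eqP <-//.
Qed.


Lemma comb_eq (c : 'rV[R]_n) d k (w : 'I_k -> R) p :
  (forall i, 0 <= w i) -> \sum_i w i = 1 -> (forall i, 0 < w i -> pdot c (p i) = d) ->
  pdot c (\sum_i w i *: p i) = d.
Proof.
move=> w0 w1 H; rewrite pdot_comb -[RHS]mul1r -w1 mulr_suml; apply: eq_bigr => i _.
case: (ltrP 0 (w i)) => wi; first by rewrite H.
have -> : w i = 0 by apply/eqP; rewrite eq_le wi w0.
by rewrite !mul0r.
Qed.

Lemma comb_le (c : 'rV[R]_n) d k (w : 'I_k -> R) p :
  (forall i, 0 <= w i) -> \sum_i w i = 1 -> (forall i, pdot c (p i) <= d) ->
  pdot c (\sum_i w i *: p i) <= d.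
Proof.
move=> w0 w1 H; rewrite pdot_comb -[leRHS]mul1r -w1 mulr_suml; apply: ler_sum => i _.
by rewrite ler_wpM2l.
Qed.

Lemma pconv_clean A k (w : 'I_k -> R) p :
  (forall i, 0 <= w i) -> \sum_i w i = 1 -> (forall i, 0 < w i -> A (p i)) ->
  pconv A (\sum_i w i *: p i).
Proof.
move=> w0 w1 H; have [i1 wi1] := pos_weight w0 w1.
exists k, w, (fun i => if 0 < w i then p i else p i1); split=> //; split=> //; split.
  by move=> i; case: ifP => [/H|_]; [|exact: H].
apply: eq_bigr => i _; case: ifP => // /negbT; rewrite -leNgt => wi.
have -> : w i = 0 by apply/eqP; rewrite eq_le wi w0.
by rewrite !scale0r.
Qed.

Lemma pconv_cat A k1 k2 (w1 : 'I_k1 -> R) p1 (w2 : 'I_k2 -> R) p2 :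
  (forall i, 0 <= w1 i) -> (forall i, 0 <= w2 i) -> \sum_i w1 i + \sum_i w2 i = 1 ->
  (forall i, 0 < w1 i -> A (p1 i)) -> (forall i, 0 < w2 i -> A (p2 i)) ->
  pconv A (\sum_i w1 i *: p1 i + \sum_i w2 i *: p2 i).
Proof.
move=> h1 h2 hs a1 a2.
pose w := fun i : 'I_(k1 + k2) => match fintype.split i with inl j => w1 j | inr j => w2 j end.
pose p := fun i : 'I_(k1 + k2) => match fintype.split i with inl j => p1 j | inr j => p2 j end.
have E1 : forall j, fintype.split (lshift k2 j) = inl j := fun j => unsplitK (inl j).
have E2 : forall j, fintype.split (rshift k1 j) = inr j := fun j => unsplitK (inr j).
have -> : \sum_i w1 i *: p1 i + \sum_i w2 i *: p2 i = \sum_i w i *: p i.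
  by rewrite big_split_ord /=; congr (_ + _); apply: eq_bigr => j _; rewrite /w /p ?E1 ?E2.
apply: pconv_clean.
- by move=> i; rewrite /w; case: fintype.split.
- by rewrite big_split_ord /= -hs; congr (_ + _); apply: eq_bigr => j _; rewrite /w ?E1 ?E2.
- by move=> i; rewrite /w /p; case: fintype.split => j; [exact: a1|exact: a2].
Qed.

Lemma count_strict (T : eqType) (a b : pred T) (s : seq T) :
  (forall x, a x -> b x) -> (exists x, x \in s /\ b x /\ ~~ a x) ->
  (count a s < count b s)%N.
Proof.
move=> ab; elim: s => [[x []]|y s IH [x [xs [bx nax]]]] //.
rewrite /=; move: xs; rewrite inE => /orP[/eqP exy|xs].
  subst y; rewrite (negbTE nax) bx add0n add1n ltnS.
  by apply: sub_count => z; apply: ab.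
have := IH (ex_intro _ x (conj xs (conj bx nax))).
case ay: (a y); first by rewrite (ab _ ay) ltn_add2l.
by move=> h; rewrite add0n; apply: leq_trans h _; apply: leq_addl.
Qed.

Lemma max_in_seq (T : eqType) (F : T -> R) (s : seq T) x0 :
  x0 \in s -> exists x, x \in s /\ forall y, y \in s -> F y <= F x.
Proof.
elim: s x0 => [|y s IH] x0 //; rewrite inE => _.
case: s IH => [|z s] IH.
  by exists y; split; [rewrite inE|move=> u; rewrite inE => /eqP ->].
have [x [xs Hx]] := IH z (mem_head z s).
case: (lerP (F y) (F x)) => H.
  exists x; split; first by rewrite inE xs orbT.
  by move=> u; rewrite inE => /orP[/eqP ->|/Hx].
exists y; split; first by rewrite mem_head.
move=> u; rewrite inE => /orP[/eqP ->//|/Hx h]; exact: le_trans h (ltW H).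
Qed.

Lemma lin_pdot m (f : {linear 'rV[R]_n -> 'rV[R]_m}) (y : 'rV[R]_m) :
  exists c : 'rV[R]_n, forall x, pdot c x = pdot y (f x).
Proof.
exists (\row_j pdot y (f (delta_mx 0 j))) => x.
rewrite {2}(row_sum_delta x) linear_sum pdot_sumr [LHS]/pdot; apply: eq_bigr => j _.
by rewrite mxE linearZ /= pdotZr mulrC.
Qed.


Lemma face_sub (Pts F G : set 'rV[R]_n) :
  is_pface (pconv Pts) F -> is_pface (pconv Pts) G ->
  (forall v, Pts v -> G v -> F v) -> G `<=` F.
Proof.
move=> [cF [dF [hF ->]]] [cG [dG [hG ->]]] H x [Px Gx].
split=> //; case: (Px) => k [w [q [w0 [w1 [qP xe]]]]].
rewrite xe in Gx *; apply: comb_eq => // i wi.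
have Gi : pdot cG (q i) = dG.
  apply: (face_pos w0 w1 _ Gx wi).
  by move=> j; apply: hG; apply: pconv_pt.
by have [] := H (q i) (qP i) (conj (pconv_pt (qP i)) Gi).
Qed.

Lemma exists_dface (Pts D : set 'rV[R]_n) (ps : seq 'rV[R]_n) : Pts = [set` ps] ->
  forall F, is_pface (pconv Pts) F -> D `&` F = set0 ->
  exists H, dfaces Pts D H /\ F `<=` H.
Proof.
move=> Hps F HF HDF.
move Hc: (count (fun v => v \notin F) ps) => k.
elim/ltn_ind: k F HF HDF Hc => k IH F HF HDF Hc.
case: (pselect (forall G, is_pface (pconv Pts) G -> D `&` G = set0 -> F `<=` G -> G = F)) => Hmax.
  by exists F; split.
move/existsNP: Hmax => [G /not_implyP [HG /not_implyP [HDG /not_implyP [FG GF]]]].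
case: (pselect (exists v, v \in ps /\ G v /\ ~ F v)) => [[v [vps [Gv nFv]]]|Hno].
  have Hlt : (count (fun v => v \notin G) ps < k)%N.
    rewrite -Hc; apply: count_strict.
      by move=> x /negP nG; apply/negP; rewrite in_setE => /FG; rewrite -in_setE.
    exists v; split=> //; split; first by apply/negP; rewrite in_setE.
    by rewrite negbK in_setE.
  have [H [dH GH]] := IH _ Hlt G HG HDG erefl.
  by exists H; split=> // x /FG /GH.
exfalso; apply: GF; apply/seteqP; split=> //.
apply: (face_sub (Pts := Pts)) => // v Pv Gv; apply: contrapT => nFv; apply: Hno; exists v; split=> //.
by move: Pv; rewrite Hps.
Qed.

End Geo.

Unset Implicit Arguments. Set Strict Implicit.

Theorem lemma4p2 (R : realType) (n : nat) (Pts : set 'rV[R]_n)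
    (D W S : set 'rV[R]_n) (m : nat) (pi : 'rV[R]_n -> 'rV[R]_m) :
  finite_set Pts ->
  (forall p, Pts p -> forall i, p 0 i \is a Num.int) ->
  is_daughter Pts D ->
  dfaces Pts D W ->
  is_pface (pconv Pts) S ->
  S `<=` W ->
  quot_proj S pi ->
  forall W', dfaces Pts D W' -> W' <> W ->
    (pi @` W') `&` PS_set Pts S pi = set0.
Proof.
move=> finP _ [[V [VP DV]] [Dne [Hdisj HD]]] HW HS SW [f [s [Hs [_ [fker pidef]]]]] W' HW' neq.
apply/seteqP; split=> // _ [[w' w'W' <-] [_ Hcl]].
set P := pconv Pts.
have HWW' : W `&` W' = set0 := Hdisj W W' HW HW' (nesym neq).
have nSW' : forall x, W' x -> ~ S x.
  move=> x Wx Sx; have : (W `&` W') x by split; [apply: SW|].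
  by rewrite HWW'.
have pi0 : forall v, S v -> pi v = 0.
  move=> v Sv; rewrite pidef; apply/fker; exists v; first exact: paff_pt.
  by exists s.
have pilin : forall x y, pi x - pi y = f (x - y).
  by move=> x y; rewrite !pidef -linearB /= opprB addrA subrK.
have piaff : forall k (w : 'I_k -> R) p, \sum_i w i = 1 ->
    pi (\sum_i w i *: p i) = \sum_i w i *: pi (p i).
  move=> k w p w1; rewrite pidef.
  have -> : \sum_i w i *: p i - s = \sum_i w i *: (p i - s).
    by rewrite (eq_bigr _ (fun i _ => scalerBr _ _ _)) sumrB -scaler_suml w1 scale1r.
  by rewrite linear_sum; apply: eq_bigr => i _; rewrite linearZ /= pidef.
case: (HW') => HW'f [HDW' _].
have [c1 [d1 [hle1 W'eq]]] := HW'f.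
have w'P : P w' /\ pdot c1 w' = d1 by move: w'W'; rewrite W'eq.
have [ps Hps] := (finite_seqP Pts).1 finP.
pose N := size ps.
pose pt := fun i : 'I_N => nth 0 ps i.
have ptP : forall i, Pts (pt i) by move=> i; rewrite Hps /= mem_nth.
have ptidx : forall v, Pts v -> exists i : 'I_N, pt i = v.
  move=> v; rewrite Hps /= => vps.
  have Hi : (index v ps < N)%N by rewrite index_mem.
  exists (Ordinal Hi).
  by rewrite /pt /= nth_index.
pose hv := fun i : 'I_N => if `[< S (pt i) >] then 0 else pi (pt i) - pi w'.
case: (farkas hv (- pi w')) => [[mu [mu0 Hmu]]|[yv [Hyv Hyvb]]].
  have [C [C0 HC]] := cone_bound hv [set: 'I_N]%SET.
  set eps := (C + 1)^-1.
  have eps0 : 0 < eps by rewrite invr_gt0 ltr_wpDl.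
  have [u [[[x Px <-] nK] bu]] := Hcl _ (nbhsx_ballx (pi w') eps eps0).
  pose inC := fun v => exists gam : 'I_N -> R, (forall l, 0 <= gam l) /\ v = \sum_l gam l *: hv l.
  have inC0 : inC 0 by exists (fun=> 0); split=> //; rewrite big1 // => l _; rewrite scale0r.
  have inCD : forall a b, inC a -> inC b -> inC (a + b).
    move=> a b [ga [ga0 ->]] [gb [gb0 ->]]; exists (fun l => ga l + gb l); split.
      by move=> l; rewrite addr_ge0.
    by rewrite -big_split; apply: eq_bigr => l _; rewrite scalerDl.
  have inCZ : forall (c : R) a, 0 <= c -> inC a -> inC (c *: a).
    move=> c a c0 [ga [ga0 ->]]; exists (fun l => c * ga l); split.
      by move=> l; rewrite mulr_ge0.
    by rewrite scaler_sumr; apply: eq_bigr => l _; rewrite scalerA.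
  have inCv : forall v, Pts v -> inC (pi v - pi w').
    move=> v Pv; have [l el] := ptidx v Pv.
    case: (pselect (S v)) => Sv.
      by rewrite pi0 // sub0r Hmu; exists mu.
    exists (fun j => (j == l)%:R); split; first by move=> j; rewrite ler0n.
    rewrite (bigD1 l) //= eqxx scale1r big1 ?addr0.
      by rewrite /hv el; case: asboolP.
    by move=> j /negbTE ->; rewrite scale0r.
  have [gam [gam0 Hgam]] : inC (pi x - pi w').
    case: Px => k [w [q [w0 [w1 [qP ->]]]]].
    have -> : pi (\sum_i w i *: q i) - pi w' = \sum_i w i *: (pi (q i) - pi w').
      rewrite piaff // (eq_bigr _ (fun i _ => scalerBr _ _ _)) sumrB.
      by rewrite -scaler_suml w1 scale1r.
    by apply: big_ind => // i _; apply: inCZ => //; apply: inCv.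
  have hT : forall i, i \notin [set: 'I_N]%SET -> gam i = 0 by move=> i; rewrite finset.in_setT.
  have [gam' [g'0 [_ [g's g'b]]]] := HC gam gam0 hT.
  rewrite -Hgam in g'b g's.
  have hb : \sum_l gam' l <= 1.
    apply: le_trans g'b _.
    move: bu; rewrite -ball_normE /ball_ /= => bu.
    have : `|pi x - pi w'| <= eps by rewrite distrC ltW.
    move=> /(ler_wpM2l C0) h; apply: le_trans h _.
    by rewrite /eps ler_pdivrMr ?ltr_wpDl // mul1r lerDl.
  pose g2 := fun l => if `[< S (pt l) >] then 0 else gam' l.
  have g20 : forall l, 0 <= g2 l by move=> l; rewrite /g2; case: asboolP.
  have g2s : \sum_l g2 l *: hv l = pi x - pi w'.
    rewrite -g's; apply: eq_bigr => l _; rewrite /g2 /hv; case: asboolP => _ //.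
    by rewrite scale0r scaler0.
  have g2b : \sum_l g2 l <= 1.
    apply: le_trans hb; apply: ler_sum => l _; rewrite /g2; case: asboolP => // _.
  have [[k' [om [r [om0 [om1 [rP w'e]]]]]] e1] := w'P.
  have rW' : forall j, 0 < om j -> W' (r j).
    move=> j oj; rewrite W'eq; split; first exact: pconv_pt.
    apply: (face_pos om0 om1 _ _ oj); last by rewrite -w'e.
    by move=> i; apply: hle1; apply: pconv_pt.
  set l0 := 1 - \sum_l g2 l.
  have l00 : 0 <= l0 by rewrite subr_ge0.
  apply: nK.
  exists (\sum_j (l0 * om j) *: r j + \sum_l g2 l *: pt l).
    apply: pconv_cat.
    - by move=> j; rewrite mulr_ge0.
    - exact: g20.
    - by rewrite -mulr_sumr om1 mulr1 subrK.
    - move=> j oj; have oj' : 0 < om j.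
        rewrite lt_neqAle om0 andbT; apply/eqP => e; move: oj; rewrite -e mulr0 ltxx.
        done.
      by split; [apply: rP|apply: nSW'; apply: rW'].
    - move=> l; rewrite /g2; case: asboolP => [_|nS]; first by rewrite ltxx.
      by move=> _; split.
  suff key : pi (\sum_j (l0 * om j) *: r j + \sum_l g2 l *: pt l) - pi w' = pi x - pi w'.
    by move/(congr1 (fun z => z + pi w')): key; rewrite !subrK.
  rewrite -g2s pilin.
  have -> : \sum_j (l0 * om j) *: r j = l0 *: w'.
    by rewrite w'e scaler_sumr; apply: eq_bigr => j _; rewrite scalerA.
  have -> : l0 *: w' + \sum_l g2 l *: pt l - w' = \sum_l g2 l *: (pt l - w').
    rewrite (eq_bigr _ (fun l _ => scalerBr _ _ _)) sumrB -scaler_suml /l0 scalerBl scale1r.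
    by rewrite addrAC (addrAC w') subrr add0r addrC.
  rewrite linear_sum; apply: eq_bigr => l _.
  by rewrite linearZ /= -pilin /hv /g2; case: asboolP => _; rewrite ?scale0r.
set Dl := - pdot yv (pi w').
have Dl0 : 0 < Dl by rewrite /Dl -pdotNr.
have Hyv' : forall v, Pts v -> ~ S v -> pdot yv (pi v - pi w') <= 0.
  move=> v Pv nSv; have [l el] := ptidx v Pv.
  have := Hyv l; rewrite /hv; case: asboolP => [Sl|_]; last by rewrite el.
  by move: Sl; rewrite el.
have [v0 [Pv0 Sv0]] : exists v, Pts v /\ S v.
  case: Hs => k [w [p [w1 [pS _]]]].
  case: k w p w1 pS => [|k] w p w1 pS.
    by move: w1; rewrite big_ord0 => /eqP; rewrite eq_sym oner_eq0.
  have := pS ord0; case: HS => c0 [d0 [hle0 Seq]].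
  rewrite {1}Seq => -[[k2 [w2 [q [w20 [w21 [qP qe]]]]]] e0].
  have [i wi] := pos_weight w20 w21.
  exists (q i); split=> //; rewrite Seq; split; first exact: pconv_pt.
  apply: (face_pos w20 w21 _ _ wi); last by rewrite -qe.
  by move=> j; apply: hle0; apply: pconv_pt.
pose ls := [seq v <- ps | `[< S v >]].
have v0ls : v0 \in ls by rewrite mem_filter; apply/andP; split; [apply/asboolP|move: Pv0; rewrite Hps].
have [ss [ssls Hss]] := max_in_seq (pdot c1) v0ls.
move: (ssls); rewrite mem_filter => /andP[/asboolP Sss ssps].
have Pss : Pts ss by rewrite Hps.
set m1 := pdot c1 ss.
have m1d1 : m1 < d1.
  rewrite lt_neqAle hle1 ?andbT; last exact: pconv_pt.
  apply/eqP => e; apply: (nSW' ss) => //; rewrite W'eq; split=> //; exact: pconv_pt.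
set lam := (d1 - m1) / Dl.
have lam0 : 0 < lam by rewrite divr_gt0 // subr_gt0.
have [cg Hcg] := lin_pdot f yv.
set cc := c1 + lam *: cg.
set M := pdot cc w'.
have E : forall v, pdot cc v - M = (pdot c1 v - d1) + lam * pdot yv (pi v - pi w').
  move=> v; rewrite /M /cc !pdotDl !pdotZl !Hcg w'P.2 pilin linearB /= pdotBr.
  by rewrite mulrBr opprD addrACA.
have keyP : forall v, Pts v -> pdot cc v <= M /\ (pdot cc v = M -> S v \/ W' v).
  move=> v Pv; case: (pselect (S v)) => Sv.
    split; last by left.
    rewrite -subr_le0 E pi0 // sub0r pdotNr -/Dl /lam divfK ?gt_eqF //.
    rewrite addrA subrK subr_le0; apply: Hss.
    by rewrite mem_filter; apply/andP; split; [apply/asboolP|move: Pv; rewrite Hps].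
  have h1 : pdot c1 v - d1 <= 0 by rewrite subr_le0; apply: hle1; exact: pconv_pt.
  have h2 : lam * pdot yv (pi v - pi w') <= 0 by rewrite pmulr_rle0 // Hyv'.
  split; first by rewrite -subr_le0 E; apply: le_trans (lerD h1 h2) _; rewrite addr0.
  move=> /eqP; rewrite -subr_eq0 E => /eqP H0; right; rewrite W'eq; split; first exact: pconv_pt.
  apply/eqP; rewrite -subr_eq0 eq_le h1 /=.
  by move/eqP: H0; rewrite addr_eq0 => /eqP ->; rewrite oppr_ge0.
pose G := [set x | P x /\ pdot cc x = M].
have HG : is_pface P G.
  exists cc, M; split=> // y [k [w [q [w0 [w1 [qP ->]]]]]].
  by apply: comb_le => // i; case: (keyP _ (qP i)).
have Gss : G ss.
  split; first exact: pconv_pt.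
  apply/eqP; rewrite -subr_eq0 E pi0 // sub0r pdotNr -/Dl /lam (divfK (negbT (gt_eqF Dl0))).
  by rewrite /m1 addrA subrK subrr.
have HDG : D `&` G = set0.
  apply/seteqP; split=> // x [Dx [_ Gx]].
  move: Dx; rewrite HD => -[k [w [q [w0 [w1 [qP xe]]]]]].
  have [i wi] := pos_weight w0 w1.
  have [Pq nq] := qP i.
  have Hq : pdot cc (q i) = M.
    apply: (face_pos w0 w1 _ _ wi); last by rewrite -xe.
    by move=> j; case: (qP j) => Pj _; case: (keyP _ Pj).
  apply: nq; case: (keyP _ Pq) => _ /(_ Hq) [Sq|Wq].
    by exists W => //; apply: SW.
  by exists W'.
have [H [dH GH]] := exists_dface Hps HG HDG.
have HeW : H = W.
  apply: contrapT => HneW.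
  have : (H `&` W) ss by split; [apply: GH|apply: SW].
  by rewrite (Hdisj H W dH HW HneW).
have : (W `&` W') w' by split=> //; rewrite -HeW; apply: GH; split=> //; exact: w'P.1.
by rewrite HWW'.
Qed.
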